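(* In the setting described in the context: (i) For all $\lambda,\mu\in\mathbb{R}^m$ and any point $x_\mu\in\mathbb{R}^n$, setting $\bar d(\mu):=\mathcal{L}_\beta(x_\mu;\mu)$ and $\nabla\bar d(\mu):=Ax_\mu-b$, we have $$d(\lambda)\le\bar d(\mu)+\langle\nabla\bar d(\mu),\lambda-\mu\rangle.$$ (ii) If $\{x^k\}$, $\{\lambda^k\}$ are generated by the IAL framework described in the context, then for every $k\ge1$, $$d(\lambda^{k+1})\ge\mathcal{L}_\beta(x^{k+1};\lambda^k)+\frac\beta2\|Ax^{k+1}-b\|^2-\eta_k.$$
   Context: Let $A\in\mathbb{R}^{m\times n}$ and $b\in\mathbb{R}^m$. Let $f:\mathbb{R}^n\to\mathbb{R}$ be convex and differentiable with Lipschitz continuous gradient. Let $g:\mathbb{R}^n\to\mathbb{R}\cup\{+\infty\}$ be a closed proper convex (possibly nonsmooth) function with bounded domain. Fix a penalty parameter $\beta>0$. For $\lambda\in\mathbb{R}^m$, define $$\hat f_\beta(x;\lambda):=f(x)+\langle\lambda,Ax-b\rangle+\tfrac{\beta}{2}\|Ax-b\|^2,\qquad \mathcal{L}_\beta(x;\lambda):=\hat f_\beta(x;\lambda)+g(x),$$ and $d(\lambda):=\min_{x\in\mathbb{R}^n}\mathcal{L}_\beta(x;\lambda)$. Here $\nabla\hat f_\beta(x;\lambda)$ denotes the gradient of $\hat f_\beta$ with respect to $x$. IAL framework: choose $x^1\in\operatorname{dom} g$, $\lambda^1\in\mathbb{R}^m$, and a nonnegative sequence $\{\eta_k\}$. For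 $k=1,2,\dots$: find a point $x^{k+1}$ such that $$\max_{x\in\mathbb{R}^n}\Big\{\langle\nabla\hat f_\beta(x^{k+1};\lambda^k),\,x^{k+1}-x\rangle+g(x^{k+1})-g(x)\Big\}\le\eta_k,$$ and then set $\lambda^{k+1}=\lambda^k+\beta(Ax^{k+1}-b)$. *)

(* Defs.v *)
From HB Require Import structures.
From mathcomp Require Import all_boot all_order all_algebra.
From mathcomp Require Import all_classical all_reals all_analysis.
Set Implicit Arguments. Unset Strict Implicit. Unset Printing Implicit Defensive.
Import Order.TTheory GRing.Theory Num.Theory numFieldNormedType.Exports.
Local Open Scope classical_set_scope.
Local Open Scope ring_scope.

Section IAL.
Variable R : realType.

Definition dotv (n : nat) (u v : 'cV[R]_n) : R := \sum_(i < n) u i 0 * v i 0.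
Definition enorm (n : nat) (u : 'cV[R]_n) : R := Num.sqrt (dotv u u).

Definition is_gradient (n : nat) (F : 'cV[R]_n -> R) (G : 'cV[R]_n -> 'cV[R]_n) :=
  forall x, differentiable F x /\ forall v, 'd F x v = dotv (G x) v.

Definition lipschitz_map (n : nat) (G : 'cV[R]_n -> 'cV[R]_n) :=
  exists L : R, forall x y, enorm (G x - G y) <= L * enorm (x - y).

Definition edom (n : nat) (g : 'cV[R]_n -> \bar R) := [set x | (g x < +oo)%E].

Definition proper_fun (n : nat) (g : 'cV[R]_n -> \bar R) :=
  (exists x, (g x < +oo)%E) /\ (forall x, (-oo < g x)%E).

Definition closed_fun (n : nat) (g : 'cV[R]_n -> \bar R) :=
  closed [set p : 'cV[R]_n * R | (g p.1 <= p.2%:E)%E].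

Definition convex_efun (n : nat) (g : 'cV[R]_n -> \bar R) :=
  forall (x y : 'cV[R]_n) (t : R), 0 <= t <= 1 ->
    (g (t *: x + (1 - t) *: y)%R <= t%:E * g x + (1 - t)%:E * g y)%E.

Definition convex_rfun (n : nat) (f : 'cV[R]_n -> R) :=
  forall (x y : 'cV[R]_n) (t : R), 0 <= t <= 1 ->
    f (t *: x + (1 - t) *: y) <= t * f x + (1 - t) * f y.

Definition bounded_dom (n : nat) (g : 'cV[R]_n -> \bar R) :=
  exists M : R, forall x, (g x < +oo)%E -> enorm x <= M.

Variables (m n : nat) (A : 'M[R]_(m, n)) (b : 'cV[R]_m) (f : 'cV[R]_n -> R)
  (g : 'cV[R]_n -> \bar R) (beta : R).

Definition fhat (lam : 'cV[R]_m) (x : 'cV[R]_n) : R :=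
  f x + dotv lam (A *m x - b) + beta / 2 * dotv (A *m x - b) (A *m x - b).

Definition Lbeta (x : 'cV[R]_n) (lam : 'cV[R]_m) : \bar R := ((fhat lam x)%:E + g x)%E.

(* d(lambda) = min_x L_beta(x; lambda), taken as the infimum *)
Definition dual (lam : 'cV[R]_m) : \bar R := ereal_inf [set Lbeta x lam | x in setT].

(* the IAL framework; gradhat lam is the gradient of fhat lam *)
Definition IAL_iterates (gradhat : 'cV[R]_m -> 'cV[R]_n -> 'cV[R]_n)
  (x : nat -> 'cV[R]_n) (lam : nat -> 'cV[R]_m) (eta : nat -> R) :=
  [/\ (g (x 1%N) < +oo)%E,
      (forall k, 0 <= eta k),
      (forall k, (1 <= k)%N -> forall z : 'cV[R]_n, (g z < +oo)%E ->
         ((dotv (gradhat (lam k) (x k.+1)) (x k.+1 - z)%R)%:E + g (x k.+1) - g z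
           <= (eta k)%:E)%E) &
      (forall k, (1 <= k)%N -> lam k.+1 = lam k + beta *: (A *m x k.+1 - b))].

End IAL.

(* Main.v *)
Require Import Defs.
From HB Require Import structures.
From mathcomp Require Import all_boot all_order all_algebra.
From mathcomp Require Import all_classical all_reals all_analysis.
From mathcomp Require Import ring lra.
Import Order.TTheory GRing.Theory Num.Theory numFieldNormedType.Exports.
Local Open Scope classical_set_scope.
Local Open Scope ring_scope.

Section D.
Variable R : realType.
Variable k : nat.
Implicit Types u v w : 'cV[R]_k.
Lemma dotvC u v : dotv u v = dotv v u.
Proof. by apply: eq_bigr => i _; rewrite mulrC. Qed.
Lemma dotvDr u v w : dotv u (v + w) = dotv u v + dotv u w.
Proof. by rewrite /dotv -big_split; apply: eq_bigr => i _; rewrite !mxE mulrDr. Qed.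
Lemma dotvZr u v (t : R) : dotv u (t *: v) = t * dotv u v.
Proof. by rewrite /dotv mulr_sumr; apply: eq_bigr => i _; rewrite !mxE mulrCA. Qed.
Lemma dotvNr u v : dotv u (- v) = - dotv u v.
Proof. by rewrite -scaleN1r dotvZr mulN1r. Qed.
Lemma dotvBr u v w : dotv u (v - w) = dotv u v - dotv u w.
Proof. by rewrite dotvDr dotvNr. Qed.
Lemma dotvDl u v w : dotv (v + w) u = dotv v u + dotv w u.
Proof. by rewrite dotvC dotvDr !(dotvC u). Qed.
Lemma dotvZl u v (t : R) : dotv (t *: v) u = t * dotv v u.
Proof. by rewrite dotvC dotvZr dotvC. Qed.
Lemma dotvBl u v w : dotv (v - w) u = dotv v u - dotv w u.
Proof. by rewrite dotvC dotvBr !(dotvC u). Qed.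
Lemma dotv_ge0 u : 0 <= dotv u u.
Proof. by apply: sumr_ge0 => i _; rewrite -expr2 sqr_ge0. Qed.
End D.
Arguments dotvC {R k}.
Arguments dotv_ge0 {R k}.
Lemma grad_ineq (R : realType) (k : nat) (F : 'cV[R]_k -> R) (y v : 'cV[R]_k) (c K : R) :
  differentiable F y ->
  (forall t : R, 0 < t -> t <= 1 -> F (t *: v + y) - F y <= t * c + t ^+ 2 * K) ->
  'd F y v <= c.
Proof.
move=> dF H.
have dv : derivable F y v by apply: diff_derivable.
rewrite -deriveE //.
set q := (fun h : R => h^-1 *: ((F \o shift y) (h *: v) - F y)).
have hq : q @ 0^' --> 'D_v F y by exact: dv.
have hq' : q @ 0^'+ --> 'D_v F y.
  move=> P /hq; apply: within_subset => t /= /lt0r_neq0 //.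
have hh : (fun t => q t - t * K) @ 0^'+ --> 'D_v F y.
  rewrite -[X in _ --> X]subr0.
  apply: cvgB => //.
  rewrite -[X in _ --> X](mul0r K); apply: cvgMl.
  apply: cvg_at_right_filter; exact: cvg_id.
rewrite -(cvg_lim _ hh) //.
apply: limr_le; first by apply/cvg_ex; eexists; exact: hh.
near=> t.
have t0 : 0 < t by near: t; exact: nbhs_right_gt.
have t1 : t <= 1 by near: t; apply: nbhs_right_ltW; exact: ltr01.
have := H t t0 t1.
rewrite /q /=.
set d := F (t *: v + y) - F y => h1.
rewrite lerBlDr ler_pdivrMl //.
have -> : t * (c + t * K) = t * c + t ^+ 2 * K by rewrite expr2; ring.
exact: h1.
Unshelve. all: by end_near.
Qed.

Lemma dotv_sq (R : realType) (k : nat) (t : R) (u w : 'cV[R]_k) :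
  dotv (t *: u + w) (t *: u + w) = t ^+ 2 * dotv u u + 2 * t * dotv u w + dotv w w.
Proof.
rewrite !dotvDl !dotvDr !dotvZl !dotvZr (dotvC w u); ring.
Qed.

Lemma dotv_sq1 (R : realType) (k : nat) (u w : 'cV[R]_k) :
  dotv (u + w) (u + w) = dotv u u + 2 * dotv u w + dotv w w.
Proof.
rewrite !dotvDl !dotvDr (dotvC w u); ring.
Qed.

Theorem lemma1 (R : realType) (m n : nat) (A : 'M[R]_(m, n)) (b : 'cV[R]_m)
  (f : 'cV[R]_n -> R) (gradf : 'cV[R]_n -> 'cV[R]_n) (g : 'cV[R]_n -> \bar R)
  (beta : R) (gradhat : 'cV[R]_m -> 'cV[R]_n -> 'cV[R]_n) :
  convex_rfun f -> is_gradient f gradf -> lipschitz_map gradf ->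
  closed_fun g -> proper_fun g -> convex_efun g -> bounded_dom g ->
  0 < beta ->
  (forall lam, is_gradient (fhat A b f beta lam) (gradhat lam)) ->
  (* (i) *)
  (forall (lam mu : 'cV[R]_m) (xmu : 'cV[R]_n),
     (dual A b f g beta lam
       <= Lbeta A b f g beta xmu mu + (dotv (A *m xmu - b) (lam - mu))%:E)%E) /\
  (* (ii) *)
  (forall (x : nat -> 'cV[R]_n) (lam : nat -> 'cV[R]_m) (eta : nat -> R),
     IAL_iterates A b g beta gradhat x lam eta ->
     forall k : nat, (1 <= k)%N ->
       (Lbeta A b f g beta (x k.+1) (lam k)
         + (beta / 2 * dotv (A *m x k.+1 - b) (A *m x k.+1 - b) - eta k)%:E
        <= dual A b f g beta (lam k.+1))%E).
Proof.
move=> fconv _ _ _ [_ gninf] _ _ beta0 hgrad; split.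
  move=> lam mu xmu.
  apply: ge_ereal_inf; exists (Lbeta A b f g beta xmu lam); first by exists xmu.
  rewrite /Lbeta.
  have -> : fhat A b f beta lam xmu =
      fhat A b f beta mu xmu + dotv (A *m xmu - b) (lam - mu).
    rewrite /fhat (dotvC (A *m xmu - b)) dotvBl; ring.
  by rewrite EFinD addeAC.
move=> x lam eta [hg1 heta hopt hlam] k hk.
set y := x k.+1.
have [gy Egy] : exists gy, g y = gy%:E.
  have := hopt k hk (x 1%N) hg1.
  have := gninf (x 1%N); have := gninf y.
  move: hg1; rewrite -/y.
  case: (g (x 1%N)) => [a| |] //; case: (g y) => [c| |] //.
  by move=> *; exists c.
apply: le_ereal_inf_tmp => _ [z _ <-].
case Egz : (g z) => [gz| |]; last by have := gninf z; rewrite Egz.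
  2: by rewrite /Lbeta Egz addey // leey.
have h2 := hopt k hk z ltac:(by rewrite Egz ltry).
rewrite -/y Egz Egy in h2.
have {}h2 : dotv (gradhat (lam k) y) (y - z) + gy - gz <= eta k.
  by rewrite -lee_fin EFinB EFinD.
rewrite /Lbeta Egy Egz -!EFinD lee_fin.
set v := z - y.
have hz : z = v + y by rewrite subrK.
have [dF dG] := hgrad (lam k) y.
set G := gradhat (lam k) y.
set r := A *m y - b.
set Av := A *m v.
have hs : A *m z - b = Av + r by rewrite hz mulmxDr /r /Av addrA.
have hgi : dotv G v <= fhat A b f beta (lam k) z - fhat A b f beta (lam k) y
    - beta / 2 * dotv Av Av.
  rewrite -dG.
  apply: (@grad_ineq _ _ _ _ _ _ (beta / 2 * dotv Av Av)); first exact: dF.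
  move=> t t0 t1.
  have ht : t *: v + y = t *: z + (1 - t) *: y.
    by rewrite hz; apply/matrixP => i j; rewrite !mxE; ring.
  have hts : A *m (t *: v + y) - b = t *: Av + r.
    by rewrite mulmxDr scalemxAr /r /Av addrA.
  have hc := fconv z y t ltac:(by rewrite (ltW t0) t1).
  rewrite -ht in hc.
  rewrite /fhat hts hs -/r; clearbody r Av.
  rewrite dotv_sq dotv_sq1 !dotvDr !dotvZr.
  nra.
have hGv : dotv G (y - z) = - dotv G v by rewrite -dotvNr /v opprB.
rewrite hGv in h2.
have hsq := dotv_ge0 (Av + r).
rewrite dotv_sq1 in hsq.
have hsq' : 0 <= beta / 2 * (dotv Av Av + 2 * dotv Av r + dotv r r).
  by apply: mulr_ge0 => //; rewrite divr_ge0 // ltW.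
move: hgi; rewrite /fhat hs hlam // -/y -/r.
clearbody r Av v.
rewrite !dotvDl dotvZl !dotvDr (dotvC r Av).
have := heta k.
nra.
Qed.
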